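(* Every normal PO-dilator has a Kruskal derivative.
   Context: A quasi embedding between partial orders $X,Y$ is a function $f$ with $f(x)\leq_Y f(y)\Rightarrow x\leq_X y$; an embedding also satisfies the converse. $\mathrm{PO}$ is the category of partial orders and quasi embeddings. $[X]^{<\omega}$ denotes the finite subsets of $X$, with $[f]^{<\omega}(a)=\{f(x)\mid x\in a\}$. A PO-dilator is a functor $W:\mathrm{PO}\to\mathrm{PO}$ mapping embeddings to embeddings, with a natural transformation $\operatorname{supp}^W:W\Rightarrow[\cdot]^{<\omega}$ such that for every embedding $f:X\to Y$, $\operatorname{rng}(W(f))=\{\sigma\in W(Y)\mid\operatorname{supp}^W_Y(\sigma)\subseteq\operatorname{rng}(f)\}$. For finite $a,b\subseteq X$, $a\leq^{\mathrm{fin}}_X b$ iff every $x\in a$ has some $y\in b$ with $x\leq_X y$ ($z\leq^{\mathrm{fin}}_X b$ means $\{z\}\leq^{\mathrm{fin}}_X b$). $W$ is normal if $\sigma\leq_{W(X)}\tau$ implies $\operatorname{supp}^W_X(\sigma)\leq^{\mathrm{fin}}_X\operatorname{supp}^W_X(\tau)$. A Kruskal fixed point of $W$ over a partial order $X$ is a partial order $Z$ with functions $\iota:X\to Z$, $\kappa:W(Z)\to Z$ such that $\operatorname{rng}(\iota)\cap\operatorname{rng}(\kappa)=\emptyset$ and, for all $x,y\in X$, $\sigma,\tau\in W(Z)$: $\iota(x)\leq_Z\iota(y)\Rightarrow x\leq_X y$; $\iota(x)\leq_Z\kappa(\tau)$ iff $\iota(x)\leq^{\mathrm{fin}}_Z\operatorname{supp}^W_Z(\tau)$;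 $\kappa(\sigma)\not\leq_Z\iota(y)$; $\kappa(\sigma)\leq_Z\kappa(\tau)$ iff ($\sigma\leq_{W(Z)}\tau$ or $\kappa(\sigma)\leq^{\mathrm{fin}}_Z\operatorname{supp}^W_Z(\tau)$). It is initial if for every Kruskal fixed point $(Z',\iota',\kappa')$ of $W$ over $X$ there is a unique quasi embedding $f:Z\to Z'$ with $f\circ\iota=\iota'$ and $f\circ\kappa=\kappa'\circ W(f)$. A Kruskal derivative of a normal PO-dilator $W$ is a tuple $(\mathcal T W,\iota,\kappa)$ consisting of a normal PO-dilator $\mathcal T W$ and families of functions $\iota_X:X\to\mathcal T W(X)$, $\kappa_X:W(\mathcal T W(X))\to\mathcal T W(X)$ indexed by partial orders $X$ such that (i) $(\mathcal T W(X),\iota_X,\kappa_X)$ is an initial Kruskal fixed point of $W$ over $X$ for each $X$, and (ii) $\iota_Y\circ f=\mathcal T W(f)\circ\iota_X$ and $\mathcal T W(f)\circ\kappa_X=\kappa_Y\circ W(\mathcal T W(f))$ for every quasi embedding $f:X\to Y$. *)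

(* Defs.v *)
From Stdlib Require Import List.
Set Implicit Arguments.
Unset Strict Implicit.

Record PO := {
  carrier :> Type;
  le : carrier -> carrier -> Prop;
  le_refl : forall x, le x x;
  le_antisym : forall x y, le x y -> le y x -> x = y;
  le_trans : forall x y z, le x y -> le y z -> le x z
}.

Arguments le {p} _ _.

Definition is_qemb (X Y : PO) (f : X -> Y) : Prop :=
  forall x y : X, le (f x) (f y) -> le x y.

Definition is_emb (X Y : PO) (f : X -> Y) : Prop :=
  forall x y : X, le (f x) (f y) <-> le x y.

Record QEmb (X Y : PO) := {
  qfun :> X -> Y;
  qfun_qemb : is_qemb qfun
}.

Definition qemb_id (X : PO) : QEmb X X.
Proof. refine {| qfun := fun x => x |}. intros x y H; exact H. Defined.

Definition qemb_comp (X Y Z : PO) (g : QEmb Y Z) (f : QEmb X Y) : QEmb X Z.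
Proof.
  refine {| qfun := fun x => g (f x) |}.
  intros x y H. apply (@qfun_qemb _ _ f). apply (@qfun_qemb _ _ g). exact H.
Defined.

(* Finite subsets of X are represented by lists (read as the set of their
   members).  [f]^{<omega}(a) = {f x | x in a} is [map f a]. *)

Definition le_fin (X : PO) (a b : list X) : Prop :=
  forall x, In x a -> exists y, In y b /\ le x y.

Record PODilator := {
  Dobj :> PO -> PO;
  Dmap : forall X Y : PO, QEmb X Y -> QEmb (Dobj X) (Dobj Y);
  Dmap_id : forall (X : PO) (s : Dobj X), Dmap (qemb_id X) s = s;
  Dmap_comp : forall (X Y Z : PO) (g : QEmb Y Z) (f : QEmb X Y) (s : Dobj X),
      Dmap (qemb_comp g f) s = Dmap g (Dmap f s);
  Dmap_emb : forall (X Y : PO) (f : QEmb X Y),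
      is_emb f -> is_emb (Dmap f);
  supp : forall X : PO, Dobj X -> list X;
  (* naturality, as an equality of finite sets:
     supp_Y (W(f) s) = [f]^{<omega} (supp_X s) *)
  supp_nat : forall (X Y : PO) (f : QEmb X Y) (s : Dobj X) (y : Y),
      In y (supp (Dmap f s)) <-> In y (map f (supp s));
  supp_rng : forall (X Y : PO) (f : QEmb X Y), is_emb f ->
      forall s : Dobj Y,
        (exists t : Dobj X, Dmap f t = s) <->
        (forall y, In y (supp s) -> exists x : X, f x = y)
}.

Arguments Dmap _ {X Y} _.
Arguments supp _ {X} _.

Definition normal (W : PODilator) : Prop :=
  forall (X : PO) (s t : W X), le s t -> le_fin (supp W s) (supp W t).

Definition KruskalFP (W : PODilator) (X Z : PO)
    (iota : X -> Z) (kappa : W Z -> Z) : Prop :=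
  (forall (x : X) (s : W Z), iota x <> kappa s) /\
  (forall x y : X, le (iota x) (iota y) -> le x y) /\
  (forall (x : X) (t : W Z),
      le (iota x) (kappa t) <-> le_fin (iota x :: nil) (supp W t)) /\
  (forall (s : W Z) (y : X), ~ le (kappa s) (iota y)) /\
  (forall s t : W Z,
      le (kappa s) (kappa t) <->
      (le s t \/ le_fin (kappa s :: nil) (supp W t))).

Arguments KruskalFP W {X Z} iota kappa.

Definition InitialKruskalFP (W : PODilator) (X Z : PO)
    (iota : X -> Z) (kappa : W Z -> Z) : Prop :=
  KruskalFP W iota kappa /\
  forall (Z' : PO) (iota' : X -> Z') (kappa' : W Z' -> Z'),
    KruskalFP W iota' kappa' ->
    exists f : QEmb Z Z',
      ((forall x, f (iota x) = iota' x) /\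
       (forall s, f (kappa s) = kappa' (Dmap W f s))) /\
      (forall g : QEmb Z Z',
         (forall x, g (iota x) = iota' x) ->
         (forall s, g (kappa s) = kappa' (Dmap W g s)) ->
         forall z, g z = f z).

Arguments InitialKruskalFP W {X Z} iota kappa.

Definition KruskalDerivative (W : PODilator) (TW : PODilator)
    (iota : forall X : PO, X -> TW X)
    (kappa : forall X : PO, W (TW X) -> TW X) : Prop :=
  normal TW /\
  (forall X : PO, InitialKruskalFP W (iota X) (kappa X)) /\
  (forall (X Y : PO) (f : QEmb X Y),
     (forall x : X, iota Y (f x) = Dmap TW f (iota X x)) /\
     (forall s : W (TW X),
        Dmap TW f (kappa X s) = kappa Y (Dmap W (Dmap TW f) s))).
Arguments KruskalDerivative : clear implicits.

(* Main.v *)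
Require Import Defs.
From Stdlib Require Import List Lia Arith PeanoNat.
From Stdlib Require Import ClassicalEpsilon FunctionalExtensionality ProofIrrelevance PropExtensionality Eqdep_dec.
Import ListNotations.
Set Implicit Arguments.
Unset Strict Implicit.

Lemma qemb_ext (X Y : PO) (f g : QEmb X Y) : (forall x, f x = g x) -> f = g.
Proof.
  destruct f as [f Hf], g as [g Hg]; simpl; intro H.
  assert (f = g) by (apply functional_extensionality; auto). subst.
  f_equal. apply proof_irrelevance.
Qed.

Lemma qemb_inj (X Y : PO) (f : X -> Y) : is_qemb f -> forall x y, f x = f y -> x = y.
Proof.
  intros Hf x y E. apply le_antisym; apply Hf; rewrite E; apply le_refl.
Qed.

Lemma emb_qemb (X Y : PO) (f : X -> Y) : is_emb f -> is_qemb f.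
Proof. intros H x y; apply H. Qed.

Lemma QEmb_inj (X Y : PO) (f : QEmb X Y) x y : f x = f y -> x = y.
Proof. apply qemb_inj, qfun_qemb. Qed.

Lemma Dmap_ext (W : PODilator) (X Y : PO) (f g : QEmb X Y) s :
  (forall x, f x = g x) -> Dmap W f s = Dmap W g s.
Proof. intro H; rewrite (qemb_ext H); reflexivity. Qed.

Lemma Dmap_comp' (W : PODilator) (X Y Z : PO) (g : QEmb Y Z) (f : QEmb X Y) (h : QEmb X Z) s :
  (forall x, h x = g (f x)) -> Dmap W h s = Dmap W g (Dmap W f s).
Proof.
  intro H. rewrite <- Dmap_comp. apply Dmap_ext. intro x; rewrite H; reflexivity.
Qed.

Lemma supp_map_inv (W : PODilator) (X Y : PO) (f : QEmb X Y) (s : W X) y :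
  In y (supp W (Dmap W f s)) -> exists x, In x (supp W s) /\ y = f x.
Proof.
  intro H. apply supp_nat in H. apply in_map_iff in H. destruct H as [x [E Hx]].
  exists x; auto.
Qed.

Lemma supp_map_in (W : PODilator) (X Y : PO) (f : QEmb X Y) (s : W X) x :
  In x (supp W s) -> In (f x) (supp W (Dmap W f s)).
Proof.
  intro H. apply supp_nat. apply in_map; auto.
Qed.

Definition EmptyPO : PO.
Proof.
  refine {| carrier := Empty_set; le := fun _ _ => True |}; intros []; auto.
Defined.

Definition empty_qemb (Y : PO) : QEmb EmptyPO Y.
Proof. refine (@Build_QEmb EmptyPO Y (fun e : EmptyPO => match e return Y with end) _). intros []. Defined.

Lemma empty_qemb_emb (Y : PO) : is_emb (empty_qemb Y).
Proof. intros []. Qed.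

Section Stages.
Variable W : PODilator.
Hypothesis HW : normal W.
Variable X : PO.

Section Next.
Variable Q : PO.
Variable BX : X -> Q -> Prop.
Variable BK : W Q -> Q -> Prop.

Definition Rn (a b : X + W Q) : Prop :=
  match a, b with
  | inl x, inl y => le x y
  | inl x, inr t => exists z, In z (supp W t) /\ BX x z
  | inr _, inl _ => False
  | inr s, inr t => le s t \/ exists z, In z (supp W t) /\ BK s z
  end.

Record good : Prop := {
  G1 : forall x y q, le x y -> BX y q -> BX x q;
  G2 : forall x q q', BX x q -> le q q' -> BX x q';
  G3 : forall x q s q', BX x q -> In q (supp W s) -> BK s q' -> BX x q';
  G4 : forall s t q, le s t -> BK t q -> BK s q;
  G5 : forall s q q', BK s q -> le q q' -> BK s q';
  G6 : forall s q t q', BK s q -> In q (supp W t) -> BK t q' -> BK s q';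
  G7 : forall s q, In q (supp W s) -> ~ BK s q
}.

Hypothesis Hg : good.

Lemma Rn_refl a : Rn a a.
Proof. destruct a; simpl; auto using le_refl. Qed.

Lemma Rn_trans a b c : Rn a b -> Rn b c -> Rn a c.
Proof.
  destruct a as [x|s], b as [y|t], c as [z|u]; simpl; try tauto.
  - apply le_trans.
  - intros Hxy [w [Hw Hb]]. exists w; split; auto. eapply G1; eauto.
  - intros [w [Hw Hb]] [Hst | [w' [Hw' Hb']]].
    + destruct (HW Hst Hw) as [w' [Hw' Hle]]. exists w'; split; auto. eapply G2; eauto.
    + exists w'; split; auto. eapply G3; eauto.
  - intros [Hst | [w [Hw Hb]]] [Htu | [w' [Hw' Hb']]].
    + left; eapply le_trans; eauto.
    + right; exists w'; split; auto. eapply G4; eauto.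
    + right. destruct (HW Htu Hw) as [w' [Hw' Hle]]. exists w'; split; auto. eapply G5; eauto.
    + right. exists w'; split; auto. eapply G6; eauto.
Qed.

Lemma Rn_antisym a b : Rn a b -> Rn b a -> a = b.
Proof.
  destruct a as [x|s], b as [y|t]; simpl; try tauto.
  - intros; f_equal; apply le_antisym; auto.
  - intros [Hst | [w [Hw Hb]]] [Hts | [w' [Hw' Hb']]].
    + f_equal; apply le_antisym; auto.
    + exfalso. eapply (G7 Hg); [exact Hw'|]. eapply G4; eauto.
    + exfalso. eapply (G7 Hg); [exact Hw|]. eapply G4; eauto.
    + exfalso. eapply (G7 Hg); [exact Hw'|]. eapply G6; eauto.
Qed.

Definition NPO : PO := {| carrier := (X + W Q)%type; le := Rn;
  le_refl := Rn_refl; le_antisym := Rn_antisym; le_trans := Rn_trans |}.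

Record Inv (e : QEmb Q NPO) : Prop := {
  I_emb : is_emb e;
  I_cX : forall x q, BX x q <-> Rn (inl x) (e q);
  I_cK : forall s q, BK s q <-> Rn (inr s) (e q);
  I_d : forall n q, Rn n (e q) -> exists q', n = e q';
  I_g : forall t q, In q (supp W t) -> Rn (e q) (inr t)
}.

End Next.

Section Step.
Variable Q : PO.
Variable BX : X -> Q -> Prop.
Variable BK : W Q -> Q -> Prop.
Variable Hg : good BX BK.
Variable e : QEmb Q (NPO Hg).
Hypothesis HI : Inv e.

Let N := NPO Hg.
Definition BX' (x : X) (n : N) : Prop := Rn BX BK (inl x) n.
Definition BK' (s : W N) (n : N) : Prop :=
  exists s' : W Q, Dmap W e s' = s /\ Rn BX BK (inr s') n.

Lemma below_rng (t : W Q) (s : W N) : le s (Dmap W e t) -> exists s', Dmap W e s' = s.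
Proof.
  intro Hle. apply (supp_rng (I_emb HI)). intros y Hy.
  destruct (HW Hle Hy) as [y' [Hy' Hyy']].
  apply supp_map_inv in Hy'. destruct Hy' as [q [Hq E]]. subst y'.
  destruct (I_d HI Hyy') as [q' E]. exists q'; auto.
Qed.

Lemma good_step : good BX' BK'.
Proof.
  unfold BX', BK'. constructor.
  - intros x y q Hxy H. eapply Rn_trans; [exact Hg| |exact H]. exact Hxy.
  - intros x q q' H Hq. eapply Rn_trans; [exact Hg|exact H|exact Hq].
  - intros x q s q' H Hin [s' [E Hs']]. subst s.
    apply supp_map_inv in Hin. destruct Hin as [p [Hp E]]. subst q.
    eapply Rn_trans; [exact Hg|exact H|]. eapply Rn_trans; [exact Hg| |exact Hs'].
    apply (I_g HI); auto.
  - intros s t q Hst [t' [E Ht']]. subst t.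
    destruct (below_rng Hst) as [s' E]. subst s. exists s'; split; auto.
    eapply Rn_trans; [exact Hg| |exact Ht']. simpl. left.
    apply (Dmap_emb (I_emb HI)). exact Hst.
  - intros s q q' [s' [E Hs']] Hq. exists s'; split; auto.
    eapply Rn_trans; [exact Hg|exact Hs'|exact Hq].
  - intros s q t q' [s' [E Hs']] Hin [t' [E' Ht']]. subst s t.
    apply supp_map_inv in Hin. destruct Hin as [p [Hp E]]. subst q.
    exists s'; split; auto.
    eapply Rn_trans; [exact Hg|exact Hs'|]. eapply Rn_trans; [exact Hg| |exact Ht'].
    apply (I_g HI); auto.
  - intros s q Hin [s' [E Hs']]. subst s.
    apply supp_map_inv in Hin. destruct Hin as [p [Hp E]]. subst q.
    apply (I_cK HI) in Hs'. exact (G7 Hg Hp Hs').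
Qed.

Let N' := NPO good_step.

Definition ef (n : N) : N' :=
  match n with
  | inl x => inl x
  | inr s => inr (Dmap W e s)
  end.

Lemma ef_emb : is_emb ef.
Proof.
  intros [x|s] [y|t]; cbn [le NPO Rn ef]; try tauto.
  - split.
    + intros [z [Hz Hb]]. destruct (@supp_map_inv W _ _ e t z Hz) as [q [Hq E]]. subst z.
      exists q; split; auto. apply (I_cX HI). exact Hb.
    + intros [q [Hq Hb]]. exists (e q); split.
      * apply supp_map_in; auto.
      * apply (I_cX HI). exact Hb.
  - split.
    + intros [H | [z [Hz [s' [E Hs']]]]].
      * left. apply (Dmap_emb (I_emb HI)). exact H.
      * right. apply QEmb_inj in E. subst s'.
        destruct (@supp_map_inv W _ _ e t z Hz) as [q [Hq E]]. subst z.
        exists q; split; auto. apply (I_cK HI). exact Hs'.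
    + intros [H | [q [Hq Hb]]].
      * left. apply (Dmap_emb (I_emb HI)). exact H.
      * right. exists (e q); split; [apply supp_map_in; auto|].
        exists s; split; auto. apply (I_cK HI). exact Hb.
Qed.

Lemma ef_inr (s : W N) (n : N) : Rn BX' BK' (inr s) (ef n) <-> BK' s n.
Proof.
  unfold BK'. destruct n as [y|t].
  - cbn [le NPO Rn ef]. split; [tauto|]. intros [s' [_ []]].
  - split.
    + intros H.
      assert (Hr : exists s', Dmap W e s' = s).
      { destruct H as [H | [z [Hz [s' [E _]]]]].
        - exact (below_rng H).
        - exists s'; auto. }
      destruct Hr as [s' E]. subst s. exists s'; split; auto.
      apply (ef_emb (inr s') (inr t)). exact H.
    + intros [s' [E H]]. subst s. apply (ef_emb (inr s') (inr t)). exact H.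
Qed.

Definition e_step : QEmb N N' := Build_QEmb (emb_qemb ef_emb).

Lemma inv_step : Inv e_step.
Proof.
  constructor; cbn [le NPO Rn ef].
  - exact ef_emb.
  - intros x n. symmetry. exact (ef_emb (inl x) n).
  - intros s n. symmetry. apply ef_inr.
  - intros [x|s] n H.
    + exists (inl x); reflexivity.
    + apply ef_inr in H. destruct H as [s' [E _]]. subst s. exists (inr s'); reflexivity.
  - intros t [x|s] Hin; cbn [le NPO Rn ef].
    + exists (inl x); split; auto. apply le_refl.
    + right. exists (inr s); split; auto. exists s; split; auto. apply Rn_refl.
Qed.

End Step.

Record Stage := mkStage {
  SQ : PO;
  SBX : X -> SQ -> Prop;
  SBK : W SQ -> SQ -> Prop;
  Sgood : good SBX SBK;
  Se : QEmb SQ (NPO Sgood);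
  Sinv : Inv Se
}.

Definition SN (st : Stage) : PO := NPO (Sgood st).

Definition step (st : Stage) : Stage :=
  @mkStage (SN st) _ _ (good_step (Sinv st)) (e_step (Sinv st)) (inv_step (Sinv st)).

Lemma good_base : good (Q:=EmptyPO) (fun _ _ => False) (fun _ _ => False).
Proof. constructor; intros; try tauto; destruct q. Qed.

Lemma inv_base : Inv (Hg:=good_base) (empty_qemb _).
Proof. constructor; intros; try destruct q; try destruct q0; try (intros []). Qed.

Definition base : Stage := @mkStage EmptyPO _ _ good_base (empty_qemb _) inv_base.

Fixpoint stage (k : nat) : Stage :=
  match k with
  | 0 => base
  | S k => step (stage k)
  end.

Definition Z (k : nat) : PO := SN (stage k).
Definition e (k : nat) : QEmb (Z k) (Z (S k)) := Se (stage (S k)).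

Definition subrel (st : Stage) (b' b : SN st) : Prop :=
  exists t q, b = inr t /\ In q (supp W t) /\ b' = Se st q.

Definition AccQ (st : Stage) := forall q : SQ st, Acc (@subrel st) (Se st q).

Lemma AccP (st : Stage) : AccQ st -> forall n : SN st, Acc (@subrel st) n.
Proof.
  intros H n. constructor. intros b' [t [q [E [Hq E']]]]. subst. apply H.
Qed.

Lemma AccQ_step (st : Stage) : (forall n : SN st, Acc (@subrel st) n) -> AccQ (step st).
Proof.
  intros H n. specialize (H n). induction H as [n _ IH].
  constructor. intros b' [T [q' [E [Hq' E']]]]. subst b'.
  destruct n as [x|t]; simpl in E; [discriminate|].
  injection E; intro ET. subst T.
  destruct (@supp_map_inv W _ _ (Se st) t q' Hq') as [q [Hq Eq]]. subst q'.
  apply IH. exists t, q; auto.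
Qed.

Lemma Acc_stage k : forall n : Z k, Acc (@subrel (stage k)) n.
Proof.
  induction k as [|k IH].
  - apply AccP. intros [].
  - apply AccP. apply AccQ_step. exact IH.
Qed.


Section Init.
Variable Z' : PO.
Variable i' : X -> Z'.
Variable k' : W Z' -> Z'.
Hypothesis HK : KruskalFP W i' k'.

Lemma K2 : forall x y, le (i' x) (i' y) -> le x y.
Proof. apply HK. Qed.
Lemma K3 : forall x t, le (i' x) (k' t) <-> le_fin (i' x :: nil) (supp W t).
Proof. apply HK. Qed.
Lemma K4 : forall s y, ~ le (k' s) (i' y).
Proof. apply HK. Qed.
Lemma K5 : forall s t, le (k' s) (k' t) <-> (le s t \/ le_fin (k' s :: nil) (supp W t)).
Proof. apply HK. Qed.

Definition fN (st : Stage) (g : QEmb (SQ st) Z') (n : SN st) : Z' :=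
  match n with
  | inl x => i' x
  | inr s => k' (Dmap W g s)
  end.

Definition Comp (st : Stage) (g : QEmb (SQ st) Z') : Prop :=
  forall q, fN g (Se st q) = g q.

Lemma fN_qemb (st : Stage) (g : QEmb (SQ st) Z') :
  Comp g -> (forall n, Acc (@subrel st) n) -> is_qemb (fN g).
Proof.
  intros Hc HA a b H. revert a H. induction (HA b) as [b _ IH]. intros a H.
  destruct b as [y|t], a as [x|s]; cbn [fN le NPO SN Rn] in *.
  - apply K2; exact H.
  - exfalso; exact (K4 H).
  - apply K3 in H. destruct (H (i' x) (or_introl eq_refl)) as [w [Hw Hle]].
    destruct (@supp_map_inv W _ _ g t w Hw) as [q [Hq E]]. subst w.
    rewrite <- Hc in Hle.
    assert (Hs : @subrel st (Se st q) (inr t)) by (exists t, q; auto).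
    specialize (IH _ Hs (inl x) Hle).
    exists q; split; auto. apply (I_cX (Sinv st)). exact IH.
  - apply K5 in H. destruct H as [H | H].
    + left. eapply qfun_qemb; exact H.
    + right. destruct (H _ (or_introl eq_refl)) as [w [Hw Hle]].
      destruct (@supp_map_inv W _ _ g t w Hw) as [q [Hq E]]. subst w.
      rewrite <- Hc in Hle.
      assert (Hs : @subrel st (Se st q) (inr t)) by (exists t, q; auto).
      specialize (IH _ Hs (inr s) Hle).
      exists q; split; auto. apply (I_cK (Sinv st)). exact IH.
Qed.

Lemma Comp_step (st : Stage) (g : QEmb (SQ st) Z') (Hc : Comp g)
  (HA : forall n, Acc (@subrel st) n) :
  @Comp (step st) (Build_QEmb (fN_qemb Hc HA)).
Proof.
  intros [x|s]; cbn [fN Se step e_step qfun ef].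
  - reflexivity.
  - f_equal. symmetry. apply Dmap_comp'. intro q. cbn [qfun]. symmetry. apply Hc.
Qed.

Definition Fstep (st : Stage) (p : {g : QEmb (SQ st) Z' | Comp g})
  (HA : forall n, Acc (@subrel st) n) : {g : QEmb (SQ (step st)) Z' | Comp g} :=
  exist _ (Build_QEmb (fN_qemb (proj2_sig p) HA)) (Comp_step (proj2_sig p) HA).

Lemma Comp_base : @Comp base (empty_qemb Z').
Proof. intros []. Qed.

Fixpoint Fk (k : nat) : {g : QEmb (SQ (stage k)) Z' | Comp g} :=
  match k with
  | 0 => exist _ (empty_qemb Z') Comp_base
  | S k => Fstep (Fk k) (@Acc_stage k)
  end.

Definition fk (k : nat) : QEmb (Z k) Z' :=
  Build_QEmb (fN_qemb (proj2_sig (Fk k)) (@Acc_stage k)).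

Lemma fk_e k (z : Z k) : fk (S k) (e k z) = fk k z.
Proof.
  unfold fk. cbn [qfun]. exact (proj2_sig (Fk (S k)) z).
Qed.

Lemma fk_inl k x : fk k (inl x) = i' x.
Proof. reflexivity. Qed.

Lemma fk_inr k (s : W (Z k)) : fk (S k) (inr s) = k' (Dmap W (fk k) s).
Proof. reflexivity. Qed.

End Init.


Unset Implicit Arguments.


Definition castZ {i j : nat} (H : i = j) (z : Z i) : Z j :=
  eq_rect i (fun n => carrier (Z n)) z j H.

Lemma castZ_e {i j} (H : i = j) (z : Z i) :
  castZ (f_equal S H) (e i z) = e j (castZ H z).
Proof. destruct H; reflexivity. Qed.

Fixpoint liftN (n k : nat) : QEmb (Z k) (Z (n + k)) :=
  match n return QEmb (Z k) (Z (n + k)) with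
  | 0 => qemb_id (Z k)
  | S n => qemb_comp (e (n + k)) (liftN n k)
  end.

Lemma e_emb k : is_emb (e k).
Proof. exact (I_emb (Sinv (stage (S k)))). Qed.

Lemma liftN_emb n k : is_emb (liftN n k).
Proof.
  induction n as [|n IH]; intros a b; simpl.
  - tauto.
  - etransitivity; [apply (e_emb (n + k))|apply IH].
Qed.

Definition T := {k : nat & Z k}.

Definition Reach (a : T) (p : nat) (z : Z p) : Prop :=
  exists n (H : n + projT1 a = p), castZ H (liftN n _ (projT2 a)) = z.

Lemma Reach_fun {a p z z'} : Reach a p z -> Reach a p z' -> z = z'.
Proof.
  intros [n [H E]] [n' [H' E']].
  assert (n = n') by lia. subst n'.
  assert (H = H') by apply (UIP_dec Nat.eq_dec). subst. reflexivity.
Qed.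

Lemma Reach_refl k (z : Z k) : Reach (existT _ k z) k z.
Proof. exists 0, eq_refl. reflexivity. Qed.

Lemma Reach_S {a p z} : Reach a p z -> Reach a (S p) (e p z).
Proof.
  intros [n [H E]]. exists (S n), (f_equal S H). subst z.
  simpl. apply castZ_e.
Qed.

Lemma Reach_ge {a p z} : Reach a p z -> projT1 a <= p.
Proof. intros [n [H _]]. lia. Qed.

Lemma Reach_ex {a} p : projT1 a <= p -> exists z, Reach a p z.
Proof.
  intro H. induction H as [|p H [z Hz]].
  - destruct a as [k z]. exists z. apply Reach_refl.
  - exists (e p z). apply Reach_S; auto.
Qed.

Lemma Reach_le {a b p za zb p' za' zb'} :
  Reach a p za -> Reach b p zb -> Reach a p' za' -> Reach b p' zb' -> p <= p' ->
  (le za zb <-> le za' zb').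
Proof.
  intros Ha Hb Ha' Hb' Hp. revert za' zb' Ha' Hb'.
  induction Hp as [|m Hp IH]; intros za' zb' Ha' Hb'.
  - rewrite (Reach_fun Ha' Ha), (Reach_fun Hb' Hb). tauto.
  - destruct (Reach_ex (a:=a) m) as [za1 H1]. { pose proof (Reach_ge Ha). lia. }
    destruct (Reach_ex (a:=b) m) as [zb1 H2]. { pose proof (Reach_ge Hb). lia. }
    rewrite (Reach_fun Ha' (Reach_S H1)), (Reach_fun Hb' (Reach_S H2)).
    transitivity (le za1 zb1); [apply IH; auto | symmetry; exact (e_emb m za1 zb1)].
Qed.

Definition pre (a b : T) : Prop :=
  exists p za zb, Reach a p za /\ Reach b p zb /\ le za zb.

Lemma pre_iff {a b p za zb} : Reach a p za -> Reach b p zb -> (pre a b <-> le za zb).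
Proof.
  intros Ha Hb. split.
  - intros [p0 [za0 [zb0 [Ha0 [Hb0 Hle]]]]].
    destruct (Reach_ex (a:=a) (Nat.max p p0)) as [za1 H1]. { pose proof (Reach_ge Ha). lia. }
    destruct (Reach_ex (a:=b) (Nat.max p p0)) as [zb1 H2]. { pose proof (Reach_ge Hb). lia. }
    apply (Reach_le Ha Hb H1 H2). lia.
    apply (Reach_le Ha0 Hb0 H1 H2). lia. exact Hle.
  - intro H. exists p, za, zb; auto.
Qed.

Lemma common2 (a b : T) : exists p za zb, Reach a p za /\ Reach b p zb.
Proof.
  destruct (Reach_ex (a:=a) (Nat.max (projT1 a) (projT1 b))) as [za H1]. lia.
  destruct (Reach_ex (a:=b) (Nat.max (projT1 a) (projT1 b))) as [zb H2]. lia.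
  exists (Nat.max (projT1 a) (projT1 b)), za, zb; auto.
Qed.

Lemma pre_refl a : pre a a.
Proof. destruct a as [k z]. exists k, z, z. split; [apply Reach_refl|split;[apply Reach_refl|apply le_refl]]. Qed.

Lemma pre_trans {a b c} : pre a b -> pre b c -> pre a c.
Proof.
  intros H1 H2.
  set (p := Nat.max (projT1 a) (Nat.max (projT1 b) (projT1 c))).
  destruct (Reach_ex (a:=a) p) as [za Ha]. unfold p; lia.
  destruct (Reach_ex (a:=b) p) as [zb Hb]. unfold p; lia.
  destruct (Reach_ex (a:=c) p) as [zc Hc]. unfold p; lia.
  rewrite (pre_iff Ha Hb) in H1. rewrite (pre_iff Hb Hc) in H2.
  rewrite (pre_iff Ha Hc). eapply le_trans; eauto.
Qed.

Definition equiv (a b : T) : Prop := pre a b /\ pre b a.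

Lemma equiv_eq {a b p za zb} : Reach a p za -> Reach b p zb -> (equiv a b <-> za = zb).
Proof.
  intros Ha Hb. unfold equiv. rewrite (pre_iff Ha Hb), (pre_iff Hb Ha). split.
  - intros [H1 H2]; apply le_antisym; auto.
  - intro E; subst; split; apply le_refl.
Qed.

Lemma cid_ext (A : Type) (P P' : A -> Prop) (h : exists x, P x) (h' : exists x, P' x) :
  P = P' -> proj1_sig (constructive_indefinite_description P h) =
            proj1_sig (constructive_indefinite_description P' h').
Proof. intro E. subst P'. rewrite (proof_irrelevance _ h h'). reflexivity. Qed.

Definition canon (a : T) : T :=
  proj1_sig (constructive_indefinite_description (fun b => equiv b a)
     (ex_intro _ a (conj (pre_refl a) (pre_refl a)))).

Lemma canon_spec a : equiv (canon a) a.
Proof. unfold canon. exact (proj2_sig (constructive_indefinite_description (fun b => equiv b a) _)). Qed.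

Lemma canon_eq {a a'} : equiv a a' -> canon a = canon a'.
Proof.
  intros [H1 H2]. unfold canon. apply cid_ext.
  apply functional_extensionality; intro b. apply propositional_extensionality.
  unfold equiv; split; intros [H3 H4]; split; eauto using pre_trans.
Qed.

Lemma canon_idem a : canon (canon a) = canon a.
Proof. apply canon_eq, canon_spec. Qed.

Definition Cc := {a : T | canon a = a}.

Definition Cle (c d : Cc) : Prop := pre (proj1_sig c) (proj1_sig d).

Lemma Cle_antisym {c d} : Cle c d -> Cle d c -> c = d.
Proof.
  destruct c as [a Ha], d as [b Hb]; unfold Cle; simpl; intros H1 H2.
  assert (E : a = b).
  { rewrite <- Ha, <- Hb. apply canon_eq. split; auto. }
  subst b. f_equal. apply proof_irrelevance.
Qed.

Definition C : PO := {| carrier := Cc; le := Cle;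
  le_refl := fun c => pre_refl (proj1_sig c);
  le_antisym := fun c d => @Cle_antisym c d;
  le_trans := fun c d f => @pre_trans (proj1_sig c) (proj1_sig d) (proj1_sig f) |}.

Definition pi (a : T) : C := exist _ (canon a) (canon_idem a).

Lemma pre_equiv_l {a a' b} : equiv a a' -> pre a b -> pre a' b.
Proof. intros [H1 H2] H. eapply pre_trans; eauto. Qed.
Lemma pre_equiv_r {a b b'} : equiv b b' -> pre a b -> pre a b'.
Proof. intros [H1 H2] H. eapply pre_trans; eauto. Qed.

Lemma pi_le a b : le (pi a) (pi b) <-> pre a b.
Proof.
  change (pre (canon a) (canon b) <-> pre a b). split; intro H.
  - eapply pre_equiv_l; [apply canon_spec|]. eapply pre_equiv_r; [apply canon_spec|]. exact H.
  - pose proof (canon_spec a) as [Ha1 Ha2]. pose proof (canon_spec b) as [Hb1 Hb2].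
    eapply pre_trans; [exact Ha1|]. eapply pre_trans; [exact H|exact Hb2].
Qed.

Lemma pi_surj (c : C) : pi (proj1_sig c) = c.
Proof.
  destruct c as [a Ha]. unfold pi. simpl.
  destruct (canon_spec a) as [H1 H2].
  apply Cle_antisym; unfold Cle; simpl; auto.
Qed.

Lemma inC_qemb k : is_qemb (fun z : Z k => pi (existT _ k z)).
Proof.
  intros a b H. apply (proj1 (pi_le _ _)) in H. rewrite (pre_iff (Reach_refl _ a) (Reach_refl _ b)) in H. exact H.
Qed.

Definition inC (k : nat) : QEmb (Z k) C := Build_QEmb (inC_qemb k).

Lemma inC_emb k : is_emb (inC k).
Proof.
  intros a b. split; [apply qfun_qemb|]. intro H. simpl. apply (proj2 (pi_le _ _)).
  rewrite (pre_iff (Reach_refl _ a) (Reach_refl _ b)). exact H.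
Qed.

Lemma inC_le k (a b : Z k) : le (inC k a) (inC k b) <-> le a b.
Proof. apply inC_emb. Qed.

Lemma inC_Reach {a p z} : Reach a p z -> inC p z = pi a.
Proof.
  intro H. simpl. apply (@le_antisym C); apply (proj2 (pi_le _ _));
  [rewrite (pre_iff (Reach_refl _ z) H) | rewrite (pre_iff H (Reach_refl _ z))]; apply le_refl.
Qed.

Lemma inC_e k (z : Z k) : inC (S k) (e k z) = inC k z.
Proof. apply (inC_Reach (a := existT _ k z)). apply Reach_S, Reach_refl. Qed.

Lemma inC_surj (c : C) : exists k z, inC k z = c.
Proof.
  destruct (proj1_sig c) as [k z] eqn:E. exists k, z.
  rewrite <- (pi_surj c). rewrite E. reflexivity.
Qed.

Lemma inC_up {k} m (z : Z k) : k <= m -> exists z' : Z m, inC m z' = inC k z.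
Proof.
  intro H. induction H as [|m H [z' Hz']].
  - exists z; reflexivity.
  - exists (e m z'). rewrite inC_e. exact Hz'.
Qed.

Lemma inC_liftN n k (z : Z k) : inC (n + k) (liftN n k z) = inC k z.
Proof.
  induction n as [|n IH]; [reflexivity|].
  change (inC (S (n + k)) (e (n + k) (liftN n k z)) = inC k z). rewrite inC_e. exact IH.
Qed.

Lemma list_stage (l : list C) : exists k, forall c, In c l -> exists z : Z k, inC k z = c.
Proof.
  induction l as [|c l [k IH]].
  - exists 0. intros c [].
  - destruct (inC_surj c) as [k1 [z1 E1]].
    exists (Nat.max k k1). intros d [E|Hd].
    + subst d. destruct (inC_up (Nat.max k k1) z1) as [z' Hz']. lia.
      exists z'. rewrite Hz'. exact E1.
    + destruct (IH d Hd) as [z Hz]. destruct (inC_up (Nat.max k k1) z) as [z' Hz']. lia.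
      exists z'. rewrite Hz'. exact Hz.
Qed.

Lemma W_stage2 (sg tau : W C) :
  exists k (s t : W (Z k)), Dmap W (inC k) s = sg /\ Dmap W (inC k) t = tau.
Proof.
  destruct (list_stage (supp W sg ++ supp W tau)) as [k Hk].
  exists k.
  destruct (proj2 (supp_rng (inC_emb k) sg)) as [s Hs].
  { intros y Hy. destruct (Hk y) as [z Hz]. apply in_or_app; auto. exists z; auto. }
  destruct (proj2 (supp_rng (inC_emb k) tau)) as [t Ht].
  { intros y Hy. destruct (Hk y) as [z Hz]. apply in_or_app; auto. exists z; auto. }
  exists s, t; auto.
Qed.

Lemma W_stage (sg : W C) : exists p : {k : nat & W (Z k)}, Dmap W (inC (projT1 p)) (projT2 p) = sg.
Proof.
  destruct (W_stage2 sg sg) as [k [s [_ [Hs _]]]]. exists (existT _ k s). exact Hs.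
Qed.

Definition mkK (k : nat) (s : W (Z k)) : Z (S k) := inr s.
Definition mkI (k : nat) (x : X) : Z k := inl x.
Definition mkK' (k : nat) (s : W (SQ (stage k))) : Z k := inr s.

Definition kappaC (sg : W C) : C :=
  let p := proj1_sig (constructive_indefinite_description _ (W_stage sg)) in
  inC (S (projT1 p)) (mkK _ (projT2 p)).

Definition iotaC (x : X) : C := inC 0 (mkI 0 x).


Definition castQ {i j : nat} (H : i = j) : QEmb (Z i) (Z j) :=
  match H in _ = j return QEmb (Z i) (Z j) with eq_refl => qemb_id _ end.

Lemma inC_cast {i j : nat} (H : i = j) z : inC j (castQ H z) = inC i z.
Proof. destruct H; reflexivity. Qed.

Lemma inr_cast {i j : nat} (H : i = j) (x : W (Z i)) :
  inC (S j) (mkK j (Dmap W (castQ H) x)) = inC (S i) (mkK i x).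
Proof. destruct H. simpl. rewrite Dmap_id. reflexivity. Qed.

Lemma e_mkK k (t : W (Z k)) : e (S k) (mkK k t) = mkK (S k) (Dmap W (e k) t).
Proof. reflexivity. Qed.

Lemma e_mkK' k (t : W (SQ (stage k))) : e k (mkK' k t) = mkK k (Dmap W (Se (stage k)) t).
Proof. reflexivity. Qed.

Lemma e_mkI k x : e k (mkI k x) = mkI (S k) x.
Proof. reflexivity. Qed.

Lemma inr_lift n k (s : W (Z k)) :
  inC (S k) (mkK k s) = inC (S (n + k)) (mkK (n + k) (Dmap W (liftN n k) s)).
Proof.
  induction n as [|n IH].
  - simpl. rewrite Dmap_id. reflexivity.
  - rewrite IH. change (liftN (S n) k) with (qemb_comp (e (n + k)) (liftN n k)).
    rewrite Dmap_comp. change (S n + k) with (S (n + k)).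
    rewrite <- e_mkK. rewrite inC_e. reflexivity.
Qed.

Lemma KL k (s : W (Z k)) : kappaC (Dmap W (inC k) s) = inC (S k) (mkK k s).
Proof.
  unfold kappaC.
  destruct (constructive_indefinite_description _ (W_stage (Dmap W (inC k) s))) as [[k' s'] Hp].
  cbn [projT1 projT2 proj1_sig] in *.
  set (A := Dmap W (liftN k' k) s).
  set (B := Dmap W (castQ (Nat.add_comm k k')) (Dmap W (liftN k k') s')).
  assert (HAB : A = B).
  { apply QEmb_inj with (f := Dmap W (inC (k' + k))). unfold A, B.
    rewrite <- (Dmap_comp' (g:=inC (k' + k)) (f:=liftN k' k) (h:=inC k)).
    2:{ intro z. symmetry. apply inC_liftN. }
    rewrite <- (Dmap_comp' (g:=inC (k' + k)) (f:=castQ (Nat.add_comm k k')) (h:=inC (k + k'))).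
    2:{ intro z. symmetry. apply inC_cast. }
    rewrite <- (Dmap_comp' (g:=inC (k + k')) (f:=liftN k k') (h:=inC k')).
    2:{ intro z. symmetry. apply inC_liftN. }
    symmetry. exact Hp. }
  symmetry. rewrite (inr_lift k' k s), (inr_lift k k' s'). fold A. rewrite HAB. unfold B.
  rewrite inr_cast. reflexivity.
Qed.

Lemma inC_mkI k x : inC k (mkI k x) = iotaC x.
Proof.
  induction k as [|k IH]; [reflexivity|].
  rewrite <- IH. rewrite <- (inC_e k (mkI k x)). reflexivity.
Qed.

Lemma KL' k (s : W (SQ (stage k))) :
  inC k (mkK' k s) = kappaC (Dmap W (qemb_comp (inC k) (Se (stage k))) s).
Proof.
  rewrite <- (inC_e k (mkK' k s)). rewrite e_mkK'. rewrite <- KL. f_equal. symmetry. apply Dmap_comp.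
Qed.

Lemma C_cases (c : C) : (exists x, c = iotaC x) \/ (exists sg, c = kappaC sg).
Proof.
  destruct (inC_surj c) as [k [z E]]. subst c. destruct z as [x|s].
  - left. exists x. apply (inC_mkI k x).
  - right. eexists. apply (KL' k s).
Qed.

Lemma C_KFP : KruskalFP W iotaC kappaC.
Proof.
  split; [|split; [|split; [|split]]].
  - intros x sg. destruct (W_stage sg) as [[k t] E]. simpl in E. subst sg.
    rewrite KL, <- (inC_mkI (S k) x). intro H. apply QEmb_inj in H. discriminate H.
  - intros x y H. unfold iotaC in H. apply (proj1 (inC_emb 0 _ _)) in H. exact H.
  - intros x t. destruct (W_stage t) as [[k t0] E]. simpl in E. subst t.
    rewrite KL, <- (inC_mkI (S k) x). rewrite inC_le.
    change ((exists z, In z (supp W t0) /\ Rn (SBX (s:=stage k)) (SBK (s:=stage k)) (inl x) z) <->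
            le_fin (inC (S k) (mkI (S k) x) :: nil) (supp W (Dmap W (inC k) t0))).
    rewrite (inC_mkI (S k) x). split.
    + intros [z [Hz Hle]] y [Ey|[]]. subst y. exists (inC k z). split.
      * apply supp_map_in. exact Hz.
      * rewrite <- (inC_mkI k x). apply (inC_emb k). exact Hle.
    + intro H. destruct (H (iotaC x) (or_introl eq_refl)) as [y [Hy Hle]].
      destruct (supp_map_inv Hy) as [z [Hz E]]. subst y.
      exists z. split; auto. rewrite <- (inC_mkI k x) in Hle. apply (inC_emb k) in Hle. exact Hle.
  - intros sg y. destruct (W_stage sg) as [[k t] E]. simpl in E. subst sg.
    rewrite KL, <- (inC_mkI (S k) y). rewrite inC_le. simpl. tauto.
  - intros sg tau. destruct (W_stage2 sg tau) as [k [s0 [t0 [E1 E2]]]]. subst sg tau.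
    rewrite !KL. rewrite inC_le.
    change ((le s0 t0 \/ exists z, In z (supp W t0) /\ SBK (s:=stage (S k)) s0 z) <->
      (le (Dmap W (inC k) s0) (Dmap W (inC k) t0) \/
       le_fin (inC (S k) (mkK k s0) :: nil) (supp W (Dmap W (inC k) t0)))).
    rewrite (Dmap_emb (inC_emb k) s0 t0). apply or_iff_compat_l. split.
    + intros [z [Hz Hb]] y [Ey|[]]. subst y. exists (inC k z). split.
      * apply supp_map_in. exact Hz.
      * rewrite <- (inC_e k z). apply (inC_emb (S k)).
        apply (I_cK (Sinv (stage (S k)))). exact Hb.
    + intro H. destruct (H _ (or_introl eq_refl)) as [y [Hy Hle]].
      destruct (supp_map_inv Hy) as [z [Hz E]]. subst y.
      exists z. split; auto. rewrite <- (inC_e k z) in Hle. apply (inC_emb (S k)) in Hle.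
      apply (I_cK (Sinv (stage (S k)))). exact Hle.
Qed.


Fixpoint sp (k : nat) : Z k -> list X :=
  match k return Z k -> list X with
  | 0 => fun z => match z with inl x => x :: nil | inr _ => nil end
  | S k => fun z => match z with inl x => x :: nil | inr s => flat_map (sp k) (supp W s) end
  end.

Lemma fam_Reach (A : Type) (h : forall k, Z k -> A)
  (Hh : forall k z, h (S k) (e k z) = h k z) a p z :
  Reach a p z -> h p z = h (projT1 a) (projT2 a).
Proof.
  intros [n [H E]]. subst z. destruct H. simpl.
  destruct a as [k a]; simpl. induction n as [|n IH]; [reflexivity|].
  change (h (S (n + k)) (e (n + k) (liftN n k a)) = h k a). rewrite Hh. exact IH.
Qed.

Lemma fam_inC (A : Type) (h : forall k, Z k -> A)
  (Hh : forall k z, h (S k) (e k z) = h k z) k z :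
  h (projT1 (proj1_sig (inC k z))) (projT2 (proj1_sig (inC k z))) = h k z.
Proof.
  change (h (projT1 (canon (existT _ k z))) (projT2 (canon (existT _ k z))) = h k z).
  set (a := canon (existT _ k z)).
  assert (Ha : equiv a (existT _ k z)) by apply canon_spec.
  destruct (common2 a (existT _ k z)) as [p [za [zb [H1 H2]]]].
  pose proof (proj1 (equiv_eq H1 H2) Ha) as E. subst zb.
  exact (eq_trans (eq_sym (fam_Reach A h Hh _ _ _ H1)) (fam_Reach A h Hh _ _ _ H2)).
Qed.

Lemma sp_e k (z : Z k) y : In y (sp (S k) (e k z)) <-> In y (sp k z).
Proof.
  revert z. induction k as [|k IH]; intros [x|s].
  - simpl. tauto.
  - change (In y (flat_map (sp 0) (supp W (Dmap W (Se base) s))) <-> In y nil).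
    split; [|intros []]. intro H. apply in_flat_map in H. destruct H as [w [Hw _]].
    destruct (supp_map_inv Hw) as [q [_ _]]. destruct q.
  - simpl. tauto.
  - change (In y (flat_map (sp (S k)) (supp W (Dmap W (e k) s))) <->
            In y (flat_map (sp k) (supp W s))).
    rewrite !in_flat_map. split.
    + intros [w [Hw Hy]]. destruct (supp_map_inv Hw) as [q [Hq E]]. subst w.
      exists q; split; auto. apply IH; auto.
    + intros [q [Hq Hy]]. exists (e k q); split.
      * apply supp_map_in; auto.
      * apply IH; auto.
Qed.

Definition spP (k : nat) (z : Z k) : X -> Prop := fun y => In y (sp k z).

Lemma spP_e k z : spP (S k) (e k z) = spP k z.
Proof.
  apply functional_extensionality; intro y. apply propositional_extensionality. apply sp_e.
Qed.

Definition suppC (c : C) : list X := sp (projT1 (proj1_sig c)) (projT2 (proj1_sig c)).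

Lemma suppC_in k z y : In y (suppC (inC k z)) <-> In y (sp k z).
Proof.
  pose proof (fam_inC _ spP spP_e k z) as E.
  change (spP _ (projT2 (proj1_sig (inC k z))) y <-> spP k z y). rewrite E. tauto.
Qed.

Lemma suppC_iota x y : In y (suppC (iotaC x)) <-> y = x.
Proof. unfold iotaC. rewrite suppC_in. simpl. split; intuition. Qed.

Lemma suppC_kappa sg y :
  In y (suppC (kappaC sg)) <-> exists c, In c (supp W sg) /\ In y (suppC c).
Proof.
  destruct (W_stage sg) as [[k s] E]. simpl in E. subst sg.
  rewrite KL, suppC_in.
  change (In y (flat_map (sp k) (supp W s)) <->
    (exists c, In c (supp W (Dmap W (inC k) s)) /\ In y (suppC c))).
  rewrite in_flat_map. split.
  - intros [q [Hq Hy]]. exists (inC k q). split; [apply supp_map_in; auto|].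
    exact (proj2 (suppC_in k q y) Hy).
  - intros [c [Hc Hy]]. destruct (supp_map_inv Hc) as [q [Hq E]]. subst c.
    exists q; split; auto. exact (proj1 (suppC_in k q y) Hy).
Qed.

Lemma C_ind (P : C -> Prop) (Hi : forall x, P (iotaC x))
  (Hk : forall sg, (forall c, In c (supp W sg) -> P c) -> P (kappaC sg)) : forall c, P c.
Proof.
  assert (H : forall k z, P (inC k z)).
  { induction k as [|k IH]; intros [x|s].
    - change (P (inC 0 (mkI 0 x))). rewrite inC_mkI. apply Hi.
    - change (P (inC 0 (mkK' 0 s))). rewrite KL'. apply Hk. intros c Hc.
      destruct (supp_map_inv Hc) as [q [Hq E]]. destruct q.
    - change (P (inC (S k) (mkI (S k) x))). rewrite inC_mkI. apply Hi.
    - change (P (inC (S k) (mkK' (S k) s))). rewrite KL'. apply Hk. intros c Hc.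
      destruct (supp_map_inv Hc) as [q [Hq E]]. subst c. simpl.
      change (P (inC (S k) (e k q))). rewrite inC_e. apply IH. }
  intro c. destruct (inC_surj c) as [k [z E]]. subst c. apply H.
Qed.

Section Init2.
Variable Z' : PO.
Variable i' : X -> Z'.
Variable k' : W Z' -> Z'.
Hypothesis HK : KruskalFP W i' k'.

Definition fC (c : C) : Z' := fk HK (projT1 (proj1_sig c)) (projT2 (proj1_sig c)).

Lemma fC_in k z : fC (inC k z) = fk HK k z.
Proof. apply (fam_inC _ (fk HK) (fk_e HK)). Qed.

Lemma common_stage (c d : C) : exists p a b, inC p a = c /\ inC p b = d.
Proof.
  destruct (inC_surj c) as [k [a Ea]]. destruct (inC_surj d) as [m [b Eb]].
  destruct (inC_up (Nat.max k m) a) as [a' Ha']. lia.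
  destruct (inC_up (Nat.max k m) b) as [b' Hb']. lia.
  exists (Nat.max k m), a', b'. split; congruence.
Qed.

Lemma fC_qemb : is_qemb fC.
Proof.
  intros c d H. destruct (common_stage c d) as [p [a [b [E1 E2]]]]. subst c d.
  rewrite !fC_in in H. apply inC_le. eapply qfun_qemb. exact H.
Qed.

Definition fQ : QEmb C Z' := Build_QEmb fC_qemb.

Lemma fQ_in k z : fQ (inC k z) = fk HK k z.
Proof. exact (fC_in k z). Qed.

Lemma fQ_iota x : fQ (iotaC x) = i' x.
Proof. unfold iotaC. rewrite fQ_in. reflexivity. Qed.

Lemma fQ_kappa sg : fQ (kappaC sg) = k' (Dmap W fQ sg).
Proof.
  destruct (W_stage sg) as [[k s] E]. simpl in E. subst sg.
  rewrite KL. rewrite fQ_in. transitivity (k' (Dmap W (fk HK k) s)); [reflexivity|]. f_equal.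
  apply Dmap_comp'. intro z. rewrite fQ_in. reflexivity.
Qed.

Lemma unique_in (g : QEmb C Z') (Hgi : forall x, g (iotaC x) = i' x)
  (Hgk : forall s, g (kappaC s) = k' (Dmap W g s)) : forall k z, g (inC k z) = fk HK k z.
Proof.
  induction k as [|k IH]; intros [x|s].
  - change (g (inC 0 (mkI 0 x)) = i' x). rewrite inC_mkI. apply Hgi.
  - change (g (inC 0 (mkK' 0 s)) = k' (Dmap W (proj1_sig (Fk HK 0)) s)).
    rewrite KL', Hgk. f_equal. rewrite <- Dmap_comp. apply Dmap_ext. intros [].
  - change (g (inC (S k) (mkI (S k) x)) = i' x). rewrite inC_mkI. apply Hgi.
  - change (g (inC (S k) (mkK' (S k) s)) = k' (Dmap W (proj1_sig (Fk HK (S k))) s)).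
    rewrite KL', Hgk. f_equal. rewrite <- Dmap_comp. apply Dmap_ext. intro q.
    change (g (inC (S k) (e k q)) = fk HK k q). rewrite inC_e. apply IH.
Qed.

Lemma fN_emb (st : Stage) (g : QEmb (SQ st) Z') (Hc : Comp i' k' g) (HA : forall n, Acc (@subrel st) n)
  (Hmono : forall x y, le x y -> le (i' x) (i' y))
  (Hg : is_emb g)
  (AX : forall x q, SBX (s:=st) x q -> le (i' x) (g q))
  (AK : forall s q, SBK (s:=st) s q -> le (k' (Dmap W g s)) (g q)) :
  forall a b : SN st, le a b -> le (fN i' k' g a) (fN i' k' g b).
Proof.
  intros [x|s] [y|t]; cbn [fN le SN NPO Rn].
  - apply Hmono.
  - intros [q [Hq Hb]]. apply (K3 HK). intros w [Ew|[]]. subst w.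
    exists (g q). split; [apply supp_map_in; auto|]. apply AX; auto.
  - intros [].
  - intros [H | [q [Hq Hb]]]; apply (K5 HK).
    + left. apply (Dmap_emb Hg). exact H.
    + right. intros w [Ew|[]]. subst w. exists (g q). split; [apply supp_map_in; auto|].
      apply AK; auto.
Qed.

Lemma fk_emb (Hmono : forall x y, le x y -> le (i' x) (i' y)) : forall k, is_emb (fk HK k).
Proof.
  assert (H : forall k, is_emb (proj1_sig (Fk HK k)) /\
     (forall x q, SBX (s:=stage k) x q -> le (i' x) (proj1_sig (Fk HK k) q)) /\
     (forall s q, SBK (s:=stage k) s q ->
        le (k' (Dmap W (proj1_sig (Fk HK k)) s)) (proj1_sig (Fk HK k) q)) /\
     is_emb (fk HK k)).
  { induction k as [|k IH].
    - assert (A : is_emb (proj1_sig (Fk HK 0))) by (intros []).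
      assert (B : forall x q, SBX (s:=stage 0) x q -> le (i' x) (proj1_sig (Fk HK 0) q))
        by (intros x []).
      assert (D : forall s q, SBK (s:=stage 0) s q ->
        le (k' (Dmap W (proj1_sig (Fk HK 0)) s)) (proj1_sig (Fk HK 0) q)) by (intros s []).
      split; [exact A|split; [exact B|split; [exact D|]]].
      intros a b. split; [apply qfun_qemb|].
      refine (@fN_emb _ _ (proj2_sig (Fk HK 0)) _ Hmono A B D a b). intro n; apply Acc_stage.
    - destruct IH as [_ [_ [_ IH]]].
      assert (A : is_emb (proj1_sig (Fk HK (S k)))) by exact IH.
      assert (B : forall x q, SBX (s:=stage (S k)) x q -> le (i' x) (proj1_sig (Fk HK (S k)) q)).
      { intros x q Hb. apply (IH (mkI k x) q) in Hb. exact Hb. }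
      assert (D : forall s q, SBK (s:=stage (S k)) s q ->
        le (k' (Dmap W (proj1_sig (Fk HK (S k))) s)) (proj1_sig (Fk HK (S k)) q)).
      { intros s q [s' [E Hb]]. subst s. apply (IH (mkK' k s') q) in Hb.
        change (le (k' (Dmap W (fk HK k) (Dmap W (Se (stage k)) s'))) (fk HK k q)).
        rewrite <- (Dmap_comp' (g:=fk HK k) (f:=Se (stage k)) (h:=proj1_sig (Fk HK k))).
        - exact Hb.
        - intro z. symmetry. exact (proj2_sig (Fk HK k) z). }
      split; [exact A|split; [exact B|split; [exact D|]]].
      intros a b. split; [apply qfun_qemb|].
      refine (@fN_emb _ _ (proj2_sig (Fk HK (S k))) _ Hmono A B D a b). intro n; apply Acc_stage. }
  intro k. apply H.
Qed.

Lemma fQ_emb (Hmono : forall x y, le x y -> le (i' x) (i' y)) : is_emb fQ.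
Proof.
  intros c d. split; [apply qfun_qemb|]. intro H.
  destruct (common_stage c d) as [p [a [b [E1 E2]]]]. subst c d.
  rewrite !fQ_in. apply (fk_emb Hmono p). apply inC_le. exact H.
Qed.

End Init2.

Lemma C_initial : InitialKruskalFP W iotaC kappaC.
Proof.
  split; [exact C_KFP|]. intros Z' i' k' HK. exists (fQ Z' i' k' HK). split.
  - split; [apply fQ_iota | apply fQ_kappa].
  - intros g Hgi Hgk c. destruct (inC_surj c) as [k [z E]]. subst c.
    rewrite (unique_in Z' i' k' HK g Hgi Hgk). rewrite fQ_in. reflexivity.
Qed.

Lemma iotaC_mono x y : le x y -> le (iotaC x) (iotaC y).
Proof. intro H. unfold iotaC. apply inC_le. exact H. Qed.


Lemma fQ_unique (Z' : PO) (i' : X -> Z') (k' : W Z' -> Z') (HK : KruskalFP W i' k')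
  (g : QEmb C Z') (Hgi : forall x, g (iotaC x) = i' x)
  (Hgk : forall s, g (kappaC s) = k' (Dmap W g s)) : forall c, g c = fQ Z' i' k' HK c.
Proof.
  intro c. destruct (inC_surj c) as [k [z E]]. subst c.
  rewrite (unique_in Z' i' k' HK g Hgi Hgk). rewrite fQ_in. reflexivity.
Qed.

End Stages.

Section Deriv.
Variable W : PODilator.
Hypothesis HW : normal W.

Lemma KFP_comp {X Y : PO} (f : QEmb X Y) :
  KruskalFP W (fun x => iotaC W HW Y (f x)) (kappaC W HW Y).
Proof.
  destruct (C_KFP W HW Y) as [H1 [H2 [H3 [H4 H5]]]].
  split; [|split; [|split; [|split]]].
  - intros x s. apply H1.
  - intros x y H. apply H2 in H. eapply qfun_qemb. exact H.
  - intros x t. apply H3.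
  - intros s y. apply H4.
  - exact H5.
Qed.

Definition TWmap {X Y : PO} (f : QEmb X Y) : QEmb (C W HW X) (C W HW Y) :=
  fQ W HW X (C W HW Y) _ _ (KFP_comp f).

Lemma TWmap_iota {X Y} (f : QEmb X Y) x : TWmap f (iotaC W HW X x) = iotaC W HW Y (f x).
Proof. apply fQ_iota. Qed.

Lemma TWmap_kappa {X Y} (f : QEmb X Y) s :
  TWmap f (kappaC W HW X s) = kappaC W HW Y (Dmap W (TWmap f) s).
Proof. apply fQ_kappa. Qed.

Lemma TWmap_id X c : TWmap (qemb_id X) c = c.
Proof.
  symmetry. apply (fQ_unique W HW X _ _ _ (KFP_comp (qemb_id X)) (qemb_id _)).
  - intro x; reflexivity.
  - intro s. change (kappaC W HW X s = kappaC W HW X (Dmap W (qemb_id _) s)). rewrite Dmap_id. reflexivity.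
Qed.

Lemma TWmap_comp X Y Z (g : QEmb Y Z) (f : QEmb X Y) c :
  TWmap (qemb_comp g f) c = TWmap g (TWmap f c).
Proof.
  symmetry. apply (fQ_unique W HW X _ _ _ (KFP_comp (qemb_comp g f)) (qemb_comp (TWmap g) (TWmap f))).
  - intro x. change (TWmap g (TWmap f (iotaC W HW X x)) = iotaC W HW Z (g (f x))).
    rewrite !TWmap_iota. reflexivity.
  - intro s. change (TWmap g (TWmap f (kappaC W HW X s)) =
      kappaC W HW Z (Dmap W (qemb_comp (TWmap g) (TWmap f)) s)).
    rewrite !TWmap_kappa. f_equal. symmetry. apply Dmap_comp.
Qed.

Lemma TWmap_emb {X Y} (f : QEmb X Y) : is_emb f -> is_emb (TWmap f).
Proof.
  intro Hf. apply fQ_emb. intros x y H. apply iotaC_mono. apply Hf. exact H.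
Qed.

Lemma TW_supp_nat {X Y} (f : QEmb X Y) c y :
  In y (suppC W HW Y (TWmap f c)) <-> In y (map f (suppC W HW X c)).
Proof.
  revert y. apply (C_ind W HW X (fun c => forall y,
    In y (suppC W HW Y (TWmap f c)) <-> In y (map f (suppC W HW X c)))).
  - intros x y. rewrite TWmap_iota, suppC_iota, in_map_iff. split.
    + intro E. subst y. exists x. split; auto. apply suppC_iota. reflexivity.
    + intros [x' [E Hx']]. apply suppC_iota in Hx'. subst. reflexivity.
  - intros sg IH y. rewrite TWmap_kappa, suppC_kappa, in_map_iff. split.
    + intros [d' [Hd' Hy]]. destruct (supp_map_inv Hd') as [d [Hd E]]. subst d'.
      apply IH in Hy; auto. apply in_map_iff in Hy. destruct Hy as [x [Ex Hx]].
      exists x. split; auto. apply suppC_kappa. exists d; auto.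
    + intros [x [Ex Hx]]. apply suppC_kappa in Hx. destruct Hx as [d [Hd Hx]].
      exists (TWmap f d). split; [apply supp_map_in; auto|].
      apply IH; auto. apply in_map_iff. exists x; auto.
Qed.

Lemma TW_supp_rng {X Y} (f : QEmb X Y) : is_emb f -> forall c : C W HW Y,
  (exists t, TWmap f t = c) <-> (forall y, In y (suppC W HW Y c) -> exists x, f x = y).
Proof.
  intros Hf c. split.
  - intros [t E] y Hy. subst c. apply TW_supp_nat in Hy. apply in_map_iff in Hy.
    destruct Hy as [x [E _]]. exists x; auto.
  - revert c. apply (C_ind W HW Y (fun c => (forall y, In y (suppC W HW Y c) -> exists x, f x = y) ->
       exists t, TWmap f t = c)).
    + intros y H. destruct (H y) as [x E]. { apply suppC_iota. reflexivity. }
      subst y. exists (iotaC W HW X x). apply TWmap_iota.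
    + intros sg IH H.
      destruct (proj2 (supp_rng (TWmap_emb f Hf) sg)) as [s0 E].
      { intros c Hc. apply IH; auto. intros y Hy. apply H. apply suppC_kappa. exists c; auto. }
      exists (kappaC W HW X s0). rewrite TWmap_kappa. rewrite E. reflexivity.
Qed.

Lemma TW_normal X (s t : C W HW X) : le s t -> le_fin (suppC W HW X s) (suppC W HW X t).
Proof.
  destruct (C_KFP W HW X) as [H1 [H2 [H3 [H4 H5]]]].
  revert s. apply (C_ind W HW X (fun t => forall s, le s t -> le_fin (suppC W HW X s) (suppC W HW X t))).
  - intros y s Hle. destruct (C_cases W HW X s) as [[x E]|[sg E]]; subst s.
    + apply H2 in Hle. intros z Hz. apply suppC_iota in Hz. subst z.
      exists y. split; auto. apply suppC_iota. reflexivity.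
    + exfalso. exact (H4 _ _ Hle).
  - intros tau IH s Hle. destruct (C_cases W HW X s) as [[x E]|[sg E]]; subst s.
    + apply H3 in Hle. destruct (Hle _ (or_introl eq_refl)) as [w [Hw Hxw]].
      intros z Hz. destruct (IH w Hw _ Hxw z Hz) as [z' [Hz' Hzz']].
      exists z'. split; auto. apply suppC_kappa. exists w; auto.
    + apply H5 in Hle. destruct Hle as [Hle | Hle].
      * intros z Hz. apply suppC_kappa in Hz. destruct Hz as [c [Hc Hz]].
        destruct (HW _ _ _ Hle c Hc) as [c' [Hc' Hcc']].
        destruct (IH c' Hc' _ Hcc' z Hz) as [z' [Hz' Hzz']].
        exists z'. split; auto. apply suppC_kappa. exists c'; auto.
      * destruct (Hle _ (or_introl eq_refl)) as [w [Hw Hsw]].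
        intros z Hz. destruct (IH w Hw _ Hsw z Hz) as [z' [Hz' Hzz']].
        exists z'. split; auto. apply suppC_kappa. exists w; auto.
Qed.

Definition TW : PODilator := {|
  Dobj := fun X => C W HW X;
  Dmap := @TWmap;
  Dmap_id := TWmap_id;
  Dmap_comp := TWmap_comp;
  Dmap_emb := @TWmap_emb;
  supp := fun X => suppC W HW X;
  supp_nat := @TW_supp_nat;
  supp_rng := @TW_supp_rng
|}.

Lemma TW_deriv : KruskalDerivative W TW (fun X => iotaC W HW X) (fun X => kappaC W HW X).
Proof.
  split; [|split].
  - intros X s t. apply TW_normal.
  - intro X. apply C_initial.
  - intros X Y f. split.
    + intro x. symmetry. apply TWmap_iota.
    + intro s. apply TWmap_kappa.
Qed.

End Deriv.

Theorem theorem4p2 :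
  forall W : PODilator, normal W ->
  exists (TW : PODilator)
         (iota : forall X : PO, X -> TW X)
         (kappa : forall X : PO, W (TW X) -> TW X),
    KruskalDerivative W TW iota kappa.
Proof.
  intros W HW. exists (TW W HW), (fun X => iotaC W HW X), (fun X => kappaC W HW X).
  apply TW_deriv.
Qed.
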